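(* For $1\le i\le k$ let $G_i$ be an $r_i$-regular graph with $n_i$ vertices, let $r=r_1\cdots r_k$, and suppose $\gcd(n_i, r/r_i)=1$ for every $i$. If each $G_i$ is $\mathbb{Z}_{n_i}$-distance antimagic, then the direct product $G_1\times\cdots\times G_k$ is $\mathbb{Z}_{n_1\cdots n_k}$-distance antimagic.
   Context: The direct product $G_1\times\cdots\times G_k$ has vertex set $V(G_1)\times\cdots\times V(G_k)$, with $(x_1,\ldots,x_k)$ and $(y_1,\ldots,y_k)$ adjacent iff $x_iy_i\in E(G_i)$ for every $i$. For a graph $G$ with $n$ vertices, a $\mathbb{Z}_n$-distance antimagic labelling is a bijection $f:V(G)\to\mathbb{Z}_n$ such that the weights $w_f(x)=\sum_{y\in N(x)} f(y)$ (mod $n$, $N(x)$ the open neighbourhood) are pairwise distinct; $G$ is $\mathbb{Z}_n$-distance antimagic if such a labelling exists. *)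

(* Defs.v *)
From mathcomp Require Import all_boot.
Set Implicit Arguments. Unset Strict Implicit. Unset Printing Implicit Defensive.

Definition simple_graph (T : finType) (e : rel T) : Prop :=
  symmetric e /\ irreflexive e.

Definition regular (T : finType) (e : rel T) (r : nat) : Prop :=
  forall x : T, #|[pred y | e x y]| = r.

(* Z_n-distance antimagic, n = #|T|: Z_n is represented by 'I_n with
   addition modulo n; weight w_f(x) = (sum_{y in N(x)} f y) mod n. *)
Definition weight (T : finType) (e : rel T) (f : T -> 'I_#|T|) (x : T) : nat :=
  (\sum_(y | e x y) nat_of_ord (f y)) %% #|T|.

Definition Zn_distance_antimagic (T : finType) (e : rel T) : Prop :=
  exists f : T -> 'I_#|T|, bijective f /\ injective (weight e f).

Definition direct_product (k : nat) (T : 'I_k -> finType)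
    (e : forall i, rel (T i)) : rel {dffun forall i, T i} :=
  fun x y => [forall i, e i (x i) (y i)].

(* Main.v *)
Require Import Defs.
From mathcomp Require Import all_boot.
From Stdlib Require Import ClassicalEpsilon.
From Stdlib Require Import ClassicalEpsilon.

Lemma cardD (k : nat) (T : 'I_k -> finType) : #|{dffun forall i, T i}| = \prod_(j < k) #|T j|.
Proof. by rewrite card_dep_ffun foldrE big_map big_enum. Qed.

Lemma pos_card {D : finType} (y : D) : 0 < #|D|.
Proof. by apply/card_gt0P; exists y. Qed.

Lemma cop_cancel n c a b : coprime n c -> c * a = c * b %[mod n] -> a = b %[mod n].
Proof.
move=> cop; wlog le: a b / a <= b.
  move=> W h; case: (leqP a b) => ab; first exact: W.
  by symmetry; apply: W; [exact: ltnW | symmetry].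
move=> /eqP; rewrite eq_sym eqn_mod_dvd ?leq_mul2l ?le ?orbT // -mulnBr Gauss_dvdr //.
by rewrite -eqn_mod_dvd // eq_sym => /eqP.
Qed.

Lemma Tagged_eq (I : eqType) (T_ : I -> eqType) i (t z : T_ i) :
  (Tagged T_ t == Tagged T_ z) = (t == z).
Proof. by apply/eqP/eqP => [H|->] //; exact: (eq_from_Tagged H). Qed.

Lemma sum_nbr (k : nat) (T : 'I_k -> finType) (e : forall i, rel (T i)) (r : 'I_k -> nat)
  (reg : forall i, regular (e i) (r i)) (x : {dffun forall i, T i}) (i : 'I_k) (g : T i -> nat) :
 \sum_(y | direct_product e x y) g (y i) = (\prod_(j < k | j != i) r j) * \sum_(z | e i (x i) z) g z.
Proof.
rewrite (partition_big (fun y : {dffun forall j, T j} => y i) (@predT (T i))) //= big_distrr /= [RHS]big_mkcond /=.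
apply: eq_bigr => z _.
rewrite (eq_bigr (fun _ => g z)); last by move=> y /andP[_ /eqP->].
rewrite sum_nat_const.
pose F := fun j => [pred t : T j | e j (x j) t && ((j == i) ==> (Tagged T t == Tagged T z))].
rewrite (@eq_card _ _ (family F : simpl_pred {dffun forall j, T j})); last first.
  move=> y; rewrite unfold_in /=; apply/idP/familyP.
    move=> /andP[/forallP H /eqP zE] j; rewrite inE H /=.
    by apply/implyP => /eqP ji; subst j; rewrite zE.
  move=> H; have Hi := H i; rewrite inE eqxx /= in Hi.
  rewrite eq_Tagged /= in Hi; case/andP: Hi => _ ->; rewrite andbT.
  by apply/forallP=> j; case/andP: (H j).
rewrite card_family foldrE big_map big_enum /= (bigD1 i) //=.
have -> : \prod_(j < k | j != i) #|F j| = \prod_(j < k | j != i) r j.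
  apply: eq_bigr => j ji; rewrite -(reg j (x j)); apply: eq_card => t.
  by rewrite !inE (negbTE ji) andbT.
case: (boolP (e i (x i) z)) => h.
  rewrite (eq_card (B := pred1 z)); first by rewrite card1 mul1n mulnC.
  move=> t; rewrite !inE eqxx /=.
  by apply/andP/eqP => [[_ /eqP H]|->]; [exact: (eq_from_Tagged H) | rewrite h eqxx].
rewrite (eq_card0 (A := F i)); first by rewrite mul0n.
move=> t; rewrite !inE eqxx /=; apply/negbTE; apply/andP => [[ht /eqP H]].
by move: ht; rewrite (eq_from_Tagged H) (negbTE h).
Qed.

Definition Mp {k : nat} (n : 'I_k -> nat) (i : nat) := \prod_(j < k | j < i) n j.

Lemma key (k : nat) (T : 'I_k -> finType) (c : 'I_k -> nat) (g : forall i, T i -> nat)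
  (y y' : {dffun forall i, T i}) :
  (forall i, coprime #|T i| (c i)) ->
  (forall i a b, (g i a = g i b %[mod #|T i|]) -> a = b) ->
  (\sum_(i < k) Mp (fun j => #|T j|) i * (c i * g i (y i))) =
  (\sum_(i < k) Mp (fun j => #|T j|) i * (c i * g i (y' i))) %[mod \prod_(j < k) #|T j|] ->
  y = y'.
Proof.
move=> cop ginj H; apply/ffunP => i.
suff: forall m (i : 'I_k), i < m -> y i = y' i by apply; apply: ltn_ord.
elim=> [//|m IH] {}i; rewrite ltnS leq_eqVlt => /orP[/eqP im|]; last exact: IH.
move: IH; rewrite -im => IH.
set M := Mp (fun j => #|T j|).
set Q := \prod_(j < k | j <= i) #|T j|.
have QN : Q %| \prod_(j < k) #|T j| by rewrite (bigID (fun j : 'I_k => j <= i)) /= dvdn_mulr.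
have Mpos : 0 < M i by apply: prodn_gt0 => j; exact: (pos_card (y j)).
have Qe : Q = M i * #|T i|.
  rewrite /Q (bigD1 i) //= mulnC; congr (_ * _); apply: eq_bigl => l.
  by rewrite ltn_neqAle andbC.
have split z : \sum_(j < k) M j * (c j * g j (z j)) =
   \sum_(j < k | j < i) M j * (c j * g j (z j)) + M i * (c i * g i (z i))
   + \sum_(j < k | i < j) M j * (c j * g j (z j)).
  rewrite (bigID (fun j : 'I_k => j < i)) /= -addnA; congr (_ + _).
  rewrite (bigD1 i) ?ltnn //=; congr (_ + _); apply: eq_bigl => j.
  by rewrite -leqNgt ltn_neqAle -val_eqE /= eq_sym andbC.
have Cd z : Q %| \sum_(j < k | i < j) M j * (c j * g j (z j)).
  apply: dvdn_sum => j ij; apply: dvdn_mulr.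
  rewrite /M /Mp (bigID (fun l : 'I_k => l <= i)) /=.
  have -> : \prod_(l < k | (l < j) && (l <= i)) #|T l| = Q.
    apply: eq_bigl => l; apply/andP/idP => [[] //|h]; split=> //.
    exact: leq_ltn_trans h ij.
  exact: dvdn_mulr.
have HQ : (\sum_(j < k) M j * (c j * g j (y j))) = (\sum_(j < k) M j * (c j * g j (y' j))) %[mod Q].
  by rewrite -[LHS](modn_dvdm _ QN) H modn_dvdm.
move: HQ; rewrite !split.
rewrite (eq_bigr (fun j : 'I_k => M j * (c j * g j (y' j))) ); last by move=> j ji; rewrite IH.
rewrite -modnDmr (eqP (Cd y)) addn0 -[in RHS]modnDmr (eqP (Cd y')) addn0.
move=> /eqP; rewrite eqn_modDl Qe -!muln_modr eqn_pmul2l // => /eqP.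
move/(cop_cancel _ _ _ _ (cop i)); exact: ginj.
Qed.

Theorem mainTheorem14 (k : nat) (T : 'I_k -> finType)
    (e : forall i, rel (T i)) (r : 'I_k -> nat) :
  (forall i, simple_graph (e i)) ->
  (forall i, regular (e i) (r i)) ->
  (forall i, coprime #|T i| (\prod_(j < k | j != i) r j)) ->
  (forall i, Zn_distance_antimagic (e i)) ->
  Zn_distance_antimagic (direct_product e).
Proof.
move=> simp reg cop anti.
have [f fP] : exists f : forall i, T i -> 'I_#|T i|,
    forall i, bijective (f i) /\ injective (weight (e i) (f i)).
  exists (fun i => proj1_sig (constructive_indefinite_description _ (anti i))).
  by move=> i; exact: proj2_sig (constructive_indefinite_description _ (anti i)).
have cD : #|{dffun forall i, T i}| = \prod_(j < k) #|T j| by exact: cardD.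
pose P (y : {dffun forall i, T i}) :=
  \sum_(i < k) Mp (fun j => #|T j|) i * (1 * f i (y i)).
pose F (y : {dffun forall i, T i}) : 'I_#|{dffun forall i, T i}| :=
  Ordinal (ltn_pmod (P y) (pos_card y)).
have Finj : injective F.
  move=> y y' /(congr1 val) /= h.
  apply: (@key k T (fun _ => 1) (fun i t => nat_of_ord (f i t))).
  - by move=> i; exact: coprimen1.
  - move=> i a b; rewrite !modn_small // => /val_inj.
    exact: (bij_inj (fP i).1).
  - by rewrite -cD.
exists F; split; first by apply: inj_card_bij => //; rewrite card_ord.
have W z : (\sum_(y | direct_product e z y) nat_of_ord (F y)) %% #|{dffun forall i, T i}| =
   (\sum_(i < k) Mp (fun j => #|T j|) i * ((\prod_(j < k | j != i) r j)
       * \sum_(w | e i (z i) w) nat_of_ord (f i w))) %% #|{dffun forall i, T i}|.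
  rewrite /= modn_summ; congr (_ %% _).
  rewrite /P exchange_big /=; apply: eq_bigr => i _.
  rewrite -(@sum_nbr k T e r reg z i (fun w => nat_of_ord (f i w))) big_distrr /=.
  by apply: eq_bigr => y _; rewrite mul1n.
move=> x x'; rewrite /weight !W => h.
apply: (@key k T (fun i => \prod_(j < k | j != i) r j)
            (fun i t => \sum_(w | e i t w) nat_of_ord (f i w))).
- exact: cop.
- by move=> i a b h'; apply: (fP i).2; rewrite /weight.
- by rewrite -cD.
Qed.
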